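(* Let $T$ be a complete theory and $\mathcal{M}$ a sufficiently saturated model of $T$. The set $\mathcal{SL}_{{\rm acl}_1}(T)$ of all regular operators of the form ${\rm acl}^\Delta_1$ ($\Delta$ a set of formulae), ordered by pointwise inclusion, is a lower semilattice with a least and a greatest element.
   Context: For a set $\Delta$ of formulae $\varphi(x,\overline{y})$ and $A\subseteq M$, ${\rm acl}^\Delta_1(A)$ is the union of the solution sets $\varphi(\mathcal{M},\overline{a})$ over $\varphi\in\Delta$ and tuples $\overline{a}$ from $A$ such that $\varphi(x,\overline{a})$ has at most one solution. An operator ${\rm cl}$ on subsets of $M$ is regular if $A\subseteq{\rm cl}(A)$ and ${\rm cl}({\rm cl}(A))\subseteq{\rm cl}(A)$ for all $A\subseteq M$. Lower semilattice: any two elements have a greatest lower bound. Pointwise inclusion: ${\rm cl}_1\leq{\rm cl}_2$ iff ${\rm cl}_1(A)\subseteq{\rm cl}_2(A)$ for all $A$. *)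

(* Defs.v *)
From Stdlib Require Import List Arith.
From Stdlib Require Vectors.Fin.
Import ListNotations.

Set Implicit Arguments.

Record Language := {
  Func : Type;
  Rel : Type;
  farity : Func -> nat;
  rarity : Rel -> nat
}.

Section Syntax.
Variable L : Language.

Inductive term : Type :=
| tvar : nat -> term
| tapp : forall f : Func L, (Fin.t (farity L f) -> term) -> term.

Inductive formula : Type :=
| fEq : term -> term -> formula
| fRel : forall r : Rel L, (Fin.t (rarity L r) -> term) -> formula
| fBot : formula
| fImp : formula -> formula -> formula
| fAll : nat -> formula -> formula.

Definition fNeg (p : formula) : formula := fImp p fBot.

Fixpoint tfree (k : nat) (t : term) : Prop :=
  match t with
  | tvar n => n = k
  | tapp f ts => exists i, tfree k (ts i)
  end.

Fixpoint free (k : nat) (p : formula) : Prop :=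
  match p with
  | fEq t1 t2 => tfree k t1 \/ tfree k t2
  | fRel r ts => exists i, tfree k (ts i)
  | fBot => False
  | fImp a b => free k a \/ free k b
  | fAll n a => n <> k /\ free k a
  end.

Definition sentence (p : formula) : Prop := forall k, ~ free k p.

(** A formula phi(x, y_1, ..., y_n): free variables among 0 (= x) and
    1..n (= y_1..y_n). *)
Record pformula : Type := {
  pf_n : nat;
  pf_f : formula;
  pf_fv : forall k, free k pf_f -> k <= pf_n
}.

End Syntax.

Record structure (L : Language) := {
  dom :> Type;
  dom_elt : dom;  (* structures are non-empty *)
  funs : forall f : Func L, (Fin.t (farity L f) -> dom) -> dom;
  rels : forall r : Rel L, (Fin.t (rarity L r) -> dom) -> Prop
}.

Section Semantics.
Variable L : Language.
Variable M : structure L.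

Fixpoint teval (v : nat -> M) (t : term L) : M :=
  match t with
  | tvar _ n => v n
  | tapp f ts => funs M f (fun i => teval v (ts i))
  end.

Definition upd (v : nat -> M) (n : nat) (m : M) : nat -> M :=
  fun k => if Nat.eqb k n then m else v k.

Fixpoint sat (v : nat -> M) (p : formula L) : Prop :=
  match p with
  | fEq t1 t2 => teval v t1 = teval v t2
  | fRel r ts => rels M r (fun i => teval v (ts i))
  | fBot _ => False
  | fImp a b => sat v a -> sat v b
  | fAll n a => forall m : M, sat (upd v n m) a
  end.

Definition holds (phi : pformula L) (a : list M) (c : M) : Prop :=
  sat (fun k => nth k (c :: a) c) (pf_f phi).

Definition tuple_from (A : M -> Prop) (phi : pformula L) (a : list M) : Prop :=
  length a = pf_n phi /\ Forall A a.

Definition acl1 (Delta : pformula L -> Prop) (A : M -> Prop) : M -> Prop :=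
  fun c => exists phi a,
    Delta phi /\ tuple_from A phi a /\
    (forall c1 c2, holds phi a c1 -> holds phi a c2 -> c1 = c2) /\
    holds phi a c.

Definition operator := (M -> Prop) -> (M -> Prop).

Definition regular (cl : operator) : Prop :=
  (forall A x, A x -> cl A x) /\
  (forall A x, cl (cl A) x -> cl A x).

Definition op_le (cl1 cl2 : operator) : Prop :=
  forall A x, cl1 A x -> cl2 A x.

Definition SL_acl1 (cl : operator) : Prop :=
  exists Delta, cl = acl1 Delta /\ regular cl.

Definition is_lower_semilattice_with_bounds (S : operator -> Prop) : Prop :=
  (forall c1 c2, S c1 -> S c2 ->
     exists g, S g /\ op_le g c1 /\ op_le g c2 /\
       (forall h, S h -> op_le h c1 -> op_le h c2 -> op_le h g)) /\
  (exists b, S b /\ forall h, S h -> op_le b h) /\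
  (exists t, S t /\ forall h, S h -> op_le h t).

Definition ptype_over (A : M -> Prop) (p : pformula L -> list M -> Prop) : Prop :=
  forall phi a, p phi a -> tuple_from A phi a.

Definition fin_satisfiable (p : pformula L -> list M -> Prop) : Prop :=
  forall l : list (pformula L * list M),
    Forall (fun q => p (fst q) (snd q)) l ->
    exists c, Forall (fun q => holds (fst q) (snd q) c) l.

Definition realized (p : pformula L -> list M -> Prop) : Prop :=
  exists c, forall phi a, p phi a -> holds phi a c.

Definition card_lt (A : M -> Prop) (K : Type) : Prop :=
  ~ exists f : K -> {x : M | A x}, forall k1 k2, f k1 = f k2 -> k1 = k2.

Definition saturated (K : Type) : Prop :=
  forall A p, card_lt A K -> ptype_over A p -> fin_satisfiable p -> realized p.

End Semantics.

Definition theory (L : Language) := formula L -> Prop.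

Definition is_theory (L : Language) (T : theory L) : Prop :=
  forall p, T p -> sentence p.

Definition models (L : Language) (M : structure L) (T : theory L) : Prop :=
  forall p v, T p -> sat M v p.

Definition complete_theory (L : Language) (T : theory L) : Prop :=
  is_theory T /\
  (exists N : structure L, models N T) /\
  forall p, sentence p ->
    (forall N : structure L, models N T -> forall v, sat N v p) \/
    (forall N : structure L, models N T -> forall v, sat N v (fNeg p)).

(* Main.v *)
Require Import Defs.
From Stdlib Require Import List Arith Lia Classical FunctionalExtensionality.
Import ListNotations.
Set Implicit Arguments.

Fixpoint trename (L : Language) (s : nat -> nat) (t : term L) : term L :=
  match t with
  | tvar _ n => tvar L (s n)
  | tapp f ts => tapp f (fun i => trename s (ts i))
  end.

Fixpoint frename (L : Language) (s : nat -> nat) (p : formula L) : formula L :=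
  match p with
  | fEq a b => fEq (trename s a) (trename s b)
  | fRel r ts => fRel r (fun i => trename s (ts i))
  | fBot _ => fBot L
  | fImp a b => fImp (frename s a) (frename s b)
  | fAll n a => fAll (s n) (frename s a)
  end.

Lemma teval_rename (L : Language) (M : structure L) s v (t : term L) :
  teval M v (trename s t) = teval M (fun k => v (s k)) t.
Proof.
  induction t as [n|f ts IH]; simpl; auto.
  f_equal; apply functional_extensionality; auto.
Qed.

Lemma sat_rename (L : Language) (M : structure L) s (Hs : forall a b, s a = s b -> a = b)
  (p : formula L) : forall v, sat M v (frename s p) <-> sat M (fun k => v (s k)) p.
Proof.
  induction p as [a b|r ts| |a IHa b IHb|n a IH]; intro v; simpl.
  - rewrite !teval_rename; tauto.
  - replace (fun i => teval M v (trename s (ts i))) with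
      (fun i => teval M (fun k => v (s k)) (ts i)); [tauto|].
    apply functional_extensionality; intro; rewrite teval_rename; auto.
  - tauto.
  - rewrite IHa, IHb; tauto.
  - split; intros H m; specialize (H m).
    + rewrite IH in H.
      replace (upd M (fun k => v (s k)) n m) with (fun k => upd M v (s n) m (s k)); auto.
      apply functional_extensionality; intro k; unfold upd.
      destruct (Nat.eqb_spec k n); destruct (Nat.eqb_spec (s k) (s n)); subst; auto.
      all: try (exfalso; auto; fail). all: apply Hs in e; congruence.
    + rewrite IH.
      replace (fun k => upd M v (s n) m (s k)) with (upd M (fun k => v (s k)) n m); auto.
      apply functional_extensionality; intro k; unfold upd.
      destruct (Nat.eqb_spec k n); destruct (Nat.eqb_spec (s k) (s n)); subst; auto.
      all: try (exfalso; auto; fail). all: apply Hs in e; congruence.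
Qed.

Lemma teval_free (L : Language) (M : structure L) (t : term L) :
  forall v w, (forall k, tfree k t -> v k = w k) -> teval M v t = teval M w t.
Proof.
  induction t as [n|f ts IH]; intros v w H; simpl in *.
  - apply H; auto.
  - f_equal; apply functional_extensionality; intro i; apply IH; eauto.
Qed.

Lemma sat_free (L : Language) (M : structure L) (p : formula L) :
  forall v w, (forall k, free k p -> v k = w k) -> (sat M v p <-> sat M w p).
Proof.
  induction p as [a b|r ts| |a IHa b IHb|n a IH]; intros v w H; simpl in *.
  - rewrite (teval_free M a v w), (teval_free M b v w); auto; tauto.
  - replace (fun i => teval M v (ts i)) with (fun i => teval M w (ts i)); [tauto|].
    apply functional_extensionality; intro i; symmetry; apply teval_free; eauto.
  - tauto.
  - rewrite (IHa v w), (IHb v w); auto; tauto.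
  - split; intros H1 m; [rewrite <- (IH (upd M v n m))|rewrite (IH (upd M v n m))]; auto;
    intros k Hk; unfold upd; destruct (Nat.eqb_spec k n); auto.
Qed.

Lemma tfree_rename (L : Language) s (t : term L) k :
  tfree k (trename s t) -> exists j, tfree j t /\ k = s j.
Proof.
  induction t as [n|f ts IH]; simpl; intro H.
  - exists n; auto.
  - destruct H as [i Hi]; destruct (IH i Hi) as [j [? ?]]; exists j; split; eauto.
Qed.

Lemma free_rename (L : Language) s (Hs : forall a b, s a = s b -> a = b) (p : formula L) k :
  free k (frename s p) -> exists j, free j p /\ k = s j.
Proof.
  induction p as [a b|r ts| |a IHa b IHb|n a IH]; simpl; intro H.
  - destruct H as [H|H]; destruct (tfree_rename _ _ _ H) as [j [? ?]]; exists j; auto.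
  - destruct H as [i Hi]; destruct (tfree_rename _ _ _ Hi) as [j [? ?]]; exists j; eauto.
  - destruct H.
  - destruct H as [H|H]; [destruct (IHa H) as [j [? ?]]|destruct (IHb H) as [j [? ?]]];
      exists j; auto.
  - destruct H as [H1 H2]; destruct (IH H2) as [j [? ?]]; exists j; split; auto.
    split; auto; intro; subst; auto.
Qed.

Definition AND (L : Language) (a b : formula L) := fNeg (fImp a (fNeg b)).
Definition EX (L : Language) (z : nat) (a : formula L) := fNeg (fAll z (fNeg a)).

Lemma sat_AND (L : Language) (M : structure L) v a b :
  sat M v (AND a b) <-> sat M v a /\ sat M v b.
Proof. unfold AND, fNeg; simpl; split; [intro H; apply NNPP; tauto | tauto]. Qed.

Lemma sat_EX (L : Language) (M : structure L) v z a :
  sat M v (EX z a) <-> exists m, sat M (upd M v z m) a.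
Proof.
  unfold EX, fNeg; simpl; split.
  - intro H; apply NNPP; intro H'; apply H; intros m Hm; apply H'; eauto.
  - intros [m Hm] H; eauto.
Qed.


Definition NN (p m q : nat) := p + m + q + 1.
Definition fresh (p m q r k : nat) := NN p m q + 2 + 3 * k + r.

Definition sphi (n p m : nat) (k : nat) :=
  let q := n - p - 1 in
  if k <=? p then k else if k =? p + 1 then NN p m q
  else if k <=? n then k + m - 1 else fresh p m q 0 k.
Definition spsi (n p m : nat) (k : nat) :=
  let q := n - p - 1 in
  if k =? 0 then NN p m q else if k <=? m then p + k else fresh p m q 1 k.
Definition spsi' (n p m : nat) (k : nat) :=
  let q := n - p - 1 in
  if k =? 0 then NN p m q + 1 else if k <=? m then p + k else fresh p m q 2 k.

Ltac dest := repeat match goal with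
  | |- context [?a <=? ?b] => destruct (Nat.leb_spec a b)
  | |- context [?a =? ?b] => destruct (Nat.eqb_spec a b)
  | H : context [?a <=? ?b] |- _ => destruct (Nat.leb_spec a b)
  | H : context [?a =? ?b] |- _ => destruct (Nat.eqb_spec a b)
  end.

Lemma sphi_inj n p m : forall a b, sphi n p m a = sphi n p m b -> a = b.
Proof. intros a b; unfold sphi, fresh, NN; dest; lia. Qed.
Lemma spsi_inj n p m : forall a b, spsi n p m a = spsi n p m b -> a = b.
Proof. intros a b; unfold spsi, fresh, NN; dest; lia. Qed.
Lemma spsi'_inj n p m : forall a b, spsi' n p m a = spsi' n p m b -> a = b.
Proof. intros a b; unfold spsi', fresh, NN; dest; lia. Qed.

Definition thetaf (L : Language) (phi psi : pformula L) (p : nat) : formula L :=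
  let n := pf_n phi in let m := pf_n psi in let q := n - p - 1 in
  let Z := NN p m q in let U := NN p m q + 1 in
  EX Z (AND (frename (spsi n p m) (pf_f psi))
          (AND (fAll U (fImp (frename (spsi' n p m) (pf_f psi)) (fEq (tvar L U) (tvar L Z))))
               (frename (sphi n p m) (pf_f phi)))).

Lemma thetaf_fv (L : Language) (phi psi : pformula L) (p : nat) :
  forall k, free k (thetaf phi psi p) -> k <= p + pf_n psi + (pf_n phi - p - 1).
Proof.
  intros k; unfold thetaf, EX, AND, fNeg; simpl.
  intros H; decompose [and or] H; clear H; try contradiction; try lia;
  match goal with
  | Hf : free _ (frename _ _) |- _ =>
      apply free_rename in Hf; [|first [apply sphi_inj|apply spsi_inj|apply spsi'_inj]];
      destruct Hf as [j [Hj ->]]; apply pf_fv in Hj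
  end;
  repeat match goal with H : _ <> _ |- _ => revert H end;
  unfold sphi, spsi, spsi', fresh; dest; lia.
Qed.

Definition subst (L : Language) (phi psi : pformula L) (p : nat) : pformula L :=
  {| pf_n := p + pf_n psi + (pf_n phi - p - 1);
     pf_f := thetaf phi psi p;
     pf_fv := @thetaf_fv L phi psi p |}.

Lemma holds_rename (L : Language) (M : structure L) (phi : pformula L) s
  (Hs : forall a b, s a = s b -> a = b) (v : nat -> M) a c :
  (forall k, k <= pf_n phi -> v (s k) = nth k (c :: a) c) ->
  (sat M v (frename s (pf_f phi)) <-> holds M phi a c).
Proof.
  intro H; rewrite sat_rename by auto; unfold holds.
  apply sat_free; intros k Hk; apply H, pf_fv; auto.
Qed.

Lemma nth_mid (A : Type) (l1 l2 : list A) i d :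
  nth (length l1 + i) (l1 ++ l2) d = nth i l2 d.
Proof. rewrite app_nth2 by lia; f_equal; lia. Qed.

Lemma subst_sem (L : Language) (M : structure L) (phi psi : pformula L)
  (pre a post : list M) c :
  length pre < pf_n phi -> length a = pf_n psi ->
  length post = pf_n phi - length pre - 1 ->
  (holds M (subst phi psi (length pre)) (pre ++ a ++ post) c <->
   exists z, holds M psi a z /\ (forall u, holds M psi a u -> u = z) /\
             holds M phi (pre ++ z :: post) c).
Proof.
  intros Hp Ha Hq.
  set (p := length pre) in *. set (n := pf_n phi) in *. set (m := pf_n psi) in *.
  set (q := n - p - 1) in *.
  unfold holds at 1; cbn [subst pf_f]; unfold thetaf.
  fold n m p q.
  set (v0 := fun k => nth k (c :: pre ++ a ++ post) c).
  rewrite sat_EX.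
  assert (HZ : forall z, forall k, k <= m ->
     upd M v0 (NN p m q) z (spsi n p m k) = nth k (z :: a) z).
  { intros z k Hk. unfold spsi, upd, v0. destruct k as [|k].
    - simpl. rewrite Nat.eqb_refl; auto.
    - simpl (S k =? 0). replace (S k <=? m) with true by (symmetry; apply Nat.leb_le; lia).
      replace (p + S k =? NN p m q) with false by (symmetry; apply Nat.eqb_neq; unfold NN; lia).
      replace (p + S k) with (S (length pre + k)) by lia. simpl.
      rewrite nth_mid, app_nth1 by lia. apply nth_indep; lia. }
  assert (HU : forall z u, forall k, k <= m ->
     upd M (upd M v0 (NN p m q) z) (NN p m q + 1) u (spsi' n p m k) = nth k (u :: a) u).
  { intros z u k Hk. unfold spsi'. destruct k as [|k].
    - unfold upd; simpl. rewrite Nat.eqb_refl; auto.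
    - simpl (S k =? 0). replace (S k <=? m) with true by (symmetry; apply Nat.leb_le; lia).
      unfold upd.
      replace (p + S k =? NN p m q + 1) with false by (symmetry; apply Nat.eqb_neq; unfold NN; lia).
      replace (p + S k =? NN p m q) with false by (symmetry; apply Nat.eqb_neq; unfold NN; lia).
      unfold v0.
      replace (p + S k) with (S (length pre + k)) by lia. simpl.
      rewrite nth_mid, app_nth1 by lia. apply nth_indep; lia. }
  assert (HP : forall z, forall k, k <= n ->
     upd M v0 (NN p m q) z (sphi n p m k) = nth k (c :: pre ++ z :: post) c).
  { intros z k Hk. unfold sphi. fold q.
    destruct (Nat.leb_spec k p).
    - unfold upd. replace (k =? NN p m q) with false by (symmetry; apply Nat.eqb_neq; unfold NN; lia).
      unfold v0. destruct k as [|k]; simpl; auto.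
      rewrite !app_nth1 by lia. auto.
    - destruct (Nat.eqb_spec k (p + 1)).
      + unfold upd; rewrite Nat.eqb_refl. subst k.
        replace (p + 1) with (S (length pre + 0)) by lia. simpl. rewrite nth_mid. auto.
      + replace (k <=? n) with true by (symmetry; apply Nat.leb_le; lia).
        unfold upd. replace (k + m - 1 =? NN p m q) with false
          by (symmetry; apply Nat.eqb_neq; unfold NN; lia).
        unfold v0.
        replace (k + m - 1) with (S (length pre + (length a + (k - p - 2)))) by lia.
        replace k with (S (length pre + S (k - p - 2))) at 2 by lia.
        simpl. rewrite !nth_mid. simpl. auto. }
  split.
  - intros [z Hz]. rewrite !sat_AND in Hz. destruct Hz as [H1 [H2 H3]].
    exists z. split; [|split].
    + exact (proj1 (holds_rename M psi _ (spsi_inj n p m) _ a z (HZ z)) H1).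
    + intros u Hu. simpl in H2. specialize (H2 u).
      rewrite (holds_rename M psi _ (spsi'_inj n p m) _ a u (HU z u)) in H2.
      specialize (H2 Hu). unfold upd in H2. simpl in H2.
      rewrite Nat.eqb_refl in H2.
      replace (NN p m q =? NN p m q + 1) with false in H2 by (symmetry; apply Nat.eqb_neq; lia).
      rewrite Nat.eqb_refl in H2. auto.
    + exact (proj1 (holds_rename M phi _ (sphi_inj n p m) _ _ c (HP z)) H3).
  - intros [z [H1 [H2 H3]]]. exists z. rewrite !sat_AND. split; [|split].
    + exact (proj2 (holds_rename M psi _ (spsi_inj n p m) _ a z (HZ z)) H1).
    + simpl. intros u Hu.
      rewrite (holds_rename M psi _ (spsi'_inj n p m) _ a u (HU z u)) in Hu.
      apply H2 in Hu. unfold upd. simpl. rewrite Nat.eqb_refl.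
      replace (NN p m q =? NN p m q + 1) with false by (symmetry; apply Nat.eqb_neq; lia).
      rewrite Nat.eqb_refl. auto.
    + exact (proj2 (holds_rename M phi _ (sphi_inj n p m) _ _ c (HP z)) H3).
Qed.

Lemma eqf_fv (L : Language) : forall k, free k (fEq (tvar L 0) (tvar L 1)) -> k <= 1.
Proof. intros k H; simpl in H; lia. Qed.

Definition eqf (L : Language) : pformula L :=
  {| pf_n := 1; pf_f := fEq (tvar L 0) (tvar L 1); pf_fv := @eqf_fv L |}.

Lemma holds_eqf (L : Language) (M : structure L) b c : holds M (eqf L) [b] c <-> c = b.
Proof. unfold holds; simpl; tauto. Qed.

Lemma tuple_eqf (L : Language) (M : structure L) (A : M -> Prop) a :
  tuple_from M A (eqf L) a -> exists b, a = [b] /\ A b.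
Proof.
  intros [Hl HA]; simpl in Hl. destruct a as [|b [|]]; simpl in Hl; try lia.
  inversion HA; eauto.
Qed.

Definition closed_sub (L : Language) (D : pformula L -> Prop) :=
  forall phi psi p, D phi -> D psi -> p < pf_n phi -> D (subst phi psi p).

Lemma acl1_mono (L : Language) (M : structure L) (D1 D2 : pformula L -> Prop) :
  (forall phi, D1 phi -> D2 phi) -> op_le (acl1 M D1) (acl1 M D2).
Proof. intros H A x [phi [a [? [? [? ?]]]]]; exists phi, a; auto. Qed.

Lemma regular_of (L : Language) (M : structure L) (D : pformula L -> Prop) :
  D (eqf L) -> closed_sub D -> regular (acl1 M D).
Proof.
  intros Heq Hcl; split.
  - intros A x Hx. exists (eqf L), [x]. split; [auto|split; [split; [reflexivity|auto]|split]].
    + intros c1 c2 H1 H2; rewrite holds_eqf in H1, H2; congruence.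
    + apply holds_eqf; auto.
  - intros A x [phi [b [HD [[Hl HF] [Hu Hh]]]]].
    assert (Main : forall post phi pre x, D phi -> Forall A pre ->
      Forall (acl1 M D A) post -> length (pre ++ post) = pf_n phi ->
      (forall c1 c2, holds M phi (pre ++ post) c1 -> holds M phi (pre ++ post) c2 -> c1 = c2) ->
      holds M phi (pre ++ post) x -> acl1 M D A x).
    { induction post as [|b0 post IH]; intros phi0 pre x0 HD0 HA Hpost Hl0 Hu0 Hh0.
      - rewrite app_nil_r in *. exists phi0, pre; repeat split; auto.
      - inversion Hpost as [|? ? Hb0 Hpost']; subst.
        destruct Hb0 as [psi [a [HDpsi [[Hla HFa] [Hupsi Hhpsi]]]]].
        rewrite length_app in Hl0; simpl in Hl0.
        assert (Hlt : length pre < pf_n phi0) by lia.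
        assert (Hq : length post = pf_n phi0 - length pre - 1) by lia.
        apply (IH (subst phi0 psi (length pre)) (pre ++ a)); auto.
        + apply Forall_app; auto.
        + rewrite !length_app; simpl; lia.
        + intros c1 c2 H1 H2. rewrite <- app_assoc in H1, H2.
          apply subst_sem in H1; auto. apply subst_sem in H2; auto.
          destruct H1 as [z1 [Hz1 [_ H1]]]; destruct H2 as [z2 [Hz2 [_ H2]]].
          assert (z1 = b0) by (eapply Hupsi; eauto). assert (z2 = b0) by (eapply Hupsi; eauto).
          subst; eauto.
        + rewrite <- app_assoc. apply subst_sem; auto.
          exists b0; split; [|split]; auto; intros u Hu'; eapply Hupsi; eauto. }
    apply (Main b phi [] x); auto.
Qed.

Definition hat (L : Language) (M : structure L) (cl : operator M) (phi : pformula L) :=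
  forall A a c, tuple_from M A phi a ->
    (forall c1 c2, holds M phi a c1 -> holds M phi a c2 -> c1 = c2) ->
    holds M phi a c -> cl A c.

Lemma hat_eq (L : Language) (M : structure L) (cl : operator M) :
  regular cl -> hat cl (eqf L).
Proof.
  intros [He _] A a c Ht _ Hh. destruct (tuple_eqf Ht) as [b [-> Hb]].
  rewrite holds_eqf in Hh; subst; auto.
Qed.

Lemma hat_closed (L : Language) (M : structure L) (cl : operator M) :
  regular cl -> closed_sub (hat cl).
Proof.
  intros [He Hi] phi psi p Hphi Hpsi Hp A a' c [Hl HF] Hu Hh.
  simpl in Hl.
  set (pre := firstn p a') in *.
  set (a := firstn (pf_n psi) (skipn p a')).
  set (post := skipn (pf_n psi) (skipn p a')).
  assert (E : a' = pre ++ a ++ post).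
  { unfold pre, a, post. rewrite !firstn_skipn. auto. }
  assert (Lpre : length pre = p) by (unfold pre; rewrite length_firstn; lia).
  assert (La : length a = pf_n psi)
    by (unfold a; rewrite length_firstn, length_skipn; lia).
  assert (Lpost : length post = pf_n phi - length pre - 1)
    by (unfold post; rewrite !length_skipn; lia).
  rewrite E in HF. apply Forall_app in HF; destruct HF as [HFpre HF].
  apply Forall_app in HF; destruct HF as [HFa HFpost].
  rewrite E, <- Lpre in Hh, Hu.
  apply subst_sem in Hh; try lia; auto.
  destruct Hh as [z [Hz [Hzu Hphiz]]].
  assert (Zcl : cl A z).
  { apply (Hpsi A a z); auto. split; auto. intros c1 c2 H1 H2.
    rewrite (Hzu c1 H1), (Hzu c2 H2); auto. }
  apply Hi. apply (Hphi (cl A) (pre ++ z :: post)); auto.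
  - split.
    + rewrite length_app; simpl; lia.
    + apply Forall_app; split; [|constructor]; auto;
      eapply Forall_impl; try eassumption; auto.
  - intros c1 c2 H1 H2. apply Hu; apply subst_sem; auto; try lia;
    exists z; auto.
Qed.

Lemma SL_eq (L : Language) (M : structure L) cl :
  SL_acl1 cl -> forall phi, (exists D, cl = acl1 M D /\ D phi) -> hat cl phi.
Proof.
  intros _ phi [D [-> HD]] A a c Ht Hu Hh. exists phi, a; auto.
Qed.

Lemma acl_hat (L : Language) (M : structure L) (cl : operator M) :
  op_le (acl1 M (hat cl)) cl.
Proof. intros A x [phi [a [Hh [Ht [Hu Hx]]]]]. eapply Hh; eauto. Qed.

Lemma hat_of_le (L : Language) (M : structure L) (cl : operator M) D :
  op_le (acl1 M D) cl -> forall phi, D phi -> hat cl phi.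
Proof. intros Hle phi HD A a c Ht Hu Hh. apply Hle. exists phi, a; auto. Qed.

Theorem mainTheorem8 (L : Language) (T : theory L) (M : structure L) (K : Type)
  (HT : complete_theory T) (HM : models M T)
  (HK : ~ exists f : K -> formula L, forall k1 k2, f k1 = f k2 -> k1 = k2)
  (Hsat : saturated M K) :
  is_lower_semilattice_with_bounds (@SL_acl1 L M).
Proof.
  clear HT HM HK Hsat.
  split; [|split].
  - intros c1 c2 [D1 [E1 R1]] [D2 [E2 R2]].
    set (D := fun phi => hat c1 phi /\ hat c2 phi).
    assert (RD : regular (acl1 M D)).
    { apply regular_of.
      - split; apply hat_eq; auto.
      - intros phi psi p [H1 H2] [H3 H4] Hp; split; eapply hat_closed; eauto. }
    exists (acl1 M D). split; [exists D; auto|split; [|split]].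
    + eapply (fun H => H); intros A x Hx; apply (acl_hat (cl:=c1)).
      revert Hx; apply acl1_mono; unfold D; tauto.
    + intros A x Hx; apply (acl_hat (cl:=c2)).
      revert Hx; apply acl1_mono; unfold D; tauto.
    + intros h [Dh [Eh Rh]] H1 H2. subst h. apply acl1_mono.
      intros phi Hphi; split; eapply hat_of_le; eauto.
  - set (D := fun phi : pformula L => phi = eqf L).
    assert (Fwd : forall A x, acl1 M D A x -> A x).
    { intros A x [phi [a [HD [Ht [_ Hh]]]]]. unfold D in HD; subst phi.
      destruct (tuple_eqf Ht) as [b [-> Hb]]. rewrite holds_eqf in Hh; subst; auto. }
    exists (acl1 M D). split.
    + exists D; split; auto. split.
      * intros A x Hx. exists (eqf L), [x]. unfold D.
        split; [auto|split; [split; [reflexivity|auto]|split]].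
        -- intros c1 c2 H1 H2; rewrite holds_eqf in H1, H2; congruence.
        -- apply holds_eqf; auto.
      * intros A x Hx; apply Fwd; auto.
    + intros h [Dh [Eh [He _]]] A x Hx. apply He, Fwd; auto.
  - exists (acl1 M (fun _ => True)). split.
    + exists (fun _ => True); split; auto. apply regular_of; auto.
      intros ? ? ? ? ? ?; auto.
    + intros h [Dh [-> _]]. apply acl1_mono; auto.
Qed.
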